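(* Let $T$ be a rooted ordered tree with $n$ vertices and root $r$. The straight-line drawing of $T$ produced by Algorithm 1 is monotone (and planar), places $r$ at $(0,0)$, respects the order of the children of every vertex, and places every vertex at a grid point $(x,y)$ with $x,y\in\{0,1,\dots,n-1\}$; i.e., it fits on an $n\times n$ grid.
   Context: $T_v$ is the subtree rooted at $v$, $|T_v|$ its number of vertices. Strategy 1: for a non-leaf vertex $u$ with assigned $a_1(u)<a_2(u)$ and children $v_1,\dots,v_m$ in order, set $a_1(v_1)=a_1(u)$, $a_1(v_i)=a_2(v_{i-1})$ for $1<i\le m$, and $a_2(v_i)=a_1(v_i)+(a_2(u)-a_1(u))\cdot\frac{|T_{v_i}|}{|T_u|-1}$. Point rule $P_1(\theta_1,\theta_2)$ for $0\le\theta_1<\theta_2\le\frac{\pi}{2}$, with $d=\lceil\frac{1}{\theta_2-\theta_1}\rceil$: (i) if $\theta_2-\theta_1>\frac{\pi}{4}$: $(1,1)$; (ii) if $\arctan(\frac12)<\theta_2-\theta_1\le\frac{\pi}{4}$: $(1,2)$ if $\theta_1\ge\frac{\pi}{4}$, $(1,1)$ if $\arctan(\frac12)\le\theta_1<\frac{\pi}{4}$, $(2,1)$ if $\theta_1<\arctan(\frac12)$; (iii) if $\theta_2-\theta_1\le\arctan(\frac12)$: $(d,\lfloor\tan(\theta_1)d+1\rfloor)$ if $\theta_2\le\frac{\pi}{4}$, $(1,1)$ if $\theta_1<\frac{\pi}{4}<\theta_2$, $(\lfloor\tan(\frac{\pi}{2}-\theta_2)d+1\rfloor,d)$ if $\theta_1\ge\frac{\pi}{4}$.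 Algorithm 1 (input: rooted ordered tree $T$ with root $r$): set $a_1(r)=0$, $a_2(r)=\frac{\pi}{2}$ and assign angles to all other vertices top-down by Strategy 1; place $r$ at $(0,0)$; top-down, place each child $v$ of an already placed vertex $u$ at $(x_u,y_u)+P_1(a_1(v),a_2(v))$. A path $p_0,\dots,p_k$ in a straight-line drawing is monotone if there is a line $\ell$ such that the orthogonal projections of $p_0,\dots,p_k$ onto $\ell$ appear along $\ell$ in this order; a drawing is monotone if every pair of vertices is joined by a monotone path. *)

(* Defs.v *)
From Stdlib Require Import Reals ZArith List.
Import ListNotations.
Open Scope R_scope.

Inductive tree : Type := Node : list tree -> tree.

Fixpoint tsize (t : tree) : nat :=
  match t with Node ts => S (list_sum (map tsize ts)) end.

(** Vertices of T are addressed by paths from the root: [] is the root,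
    p ++ [i] is the i-th child (0-based, in the given order) of p. *)
Fixpoint subtree (t : tree) (p : list nat) : option tree :=
  match p with
  | [] => Some t
  | i :: p' => match t with Node ts =>
      match nth_error ts i with Some c => subtree c p' | None => None end end
  end.

Definition is_vertex (t : tree) (p : list nat) : Prop := subtree t p <> None.

Definition Zfloor (x : R) : Z := Int_part x.
Definition Zceil (x : R) : Z := (- Int_part (- x))%Z.

Definition P1 (t1 t2 : R) : Z * Z :=
  let d := Zceil (1 / (t2 - t1)) in
  if Rlt_dec (PI / 4) (t2 - t1) then (1%Z, 1%Z)
  else if Rlt_dec (atan (1 / 2)) (t2 - t1) then
    (if Rle_dec (PI / 4) t1 then (1%Z, 2%Z)
     else if Rle_dec (atan (1 / 2)) t1 then (1%Z, 1%Z)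
     else (2%Z, 1%Z))
  else if Rle_dec t2 (PI / 4) then (d, Zfloor (tan t1 * IZR d + 1))
  else if Rlt_dec t1 (PI / 4) then (1%Z, 1%Z)
  else (Zfloor (tan (PI / 2 - t2) * IZR d + 1), d).

(** Strategy 1: given a1(u), a2(u), |T_u| and the children of u in order,
    the list of intervals (a1(v_i), a2(v_i)):  a1(v_1) = a1(u),
    a1(v_i) = a2(v_{i-1}),  a2(v_i) = a1(v_i) + (a2(u)-a1(u)) |T_{v_i}| / (|T_u|-1). *)
Fixpoint child_angles (a1u a2u nu : R) (start : R) (ts : list tree) : list (R * R) :=
  match ts with
  | [] => []
  | c :: ts' =>
      let e := start + (a2u - a1u) * INR (tsize c) / (nu - 1) in
      (start, e) :: child_angles a1u a2u nu e ts'
  end.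

Fixpoint place (t : tree) (a1 a2 : R) (x y : Z) (p : list nat) : Z * Z :=
  match p with
  | [] => (x, y)
  | i :: p' =>
      match t with Node ts =>
        match nth_error ts i, nth_error (child_angles a1 a2 (INR (tsize t)) a1 ts) i with
        | Some c, Some (b1, b2) =>
            let (dx, dy) := P1 b1 b2 in place c b1 b2 (x + dx)%Z (y + dy)%Z p'
        | _, _ => (x, y)
        end
      end
  end.

Definition algorithm1 (t : tree) : list nat -> Z * Z := place t 0 (PI / 2) 0%Z 0%Z.

Definition on_seg (q : R * R) (a b : Z * Z) : Prop :=
  exists l : R, 0 <= l <= 1 /\
    fst q = IZR (fst a) + l * (IZR (fst b) - IZR (fst a)) /\
    snd q = IZR (snd a) + l * (IZR (snd b) - IZR (snd a)).

Definition pt (a : Z * Z) : R * R := (IZR (fst a), IZR (snd a)).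

(** edges of T are identified with their child endpoint c (c <> root);
    the other endpoint is the parent removelast c. *)
Definition is_edge (t : tree) (c : list nat) : Prop := c <> [] /\ is_vertex t c.

Definition planar (t : tree) (pos : list nat -> Z * Z) : Prop :=
  (forall u v, is_vertex t u -> is_vertex t v -> pos u = pos v -> u = v) /\
  (forall c1 c2, is_edge t c1 -> is_edge t c2 -> c1 <> c2 ->
     forall q, on_seg q (pos (removelast c1)) (pos c1) ->
               on_seg q (pos (removelast c2)) (pos c2) ->
     exists w, (w = c1 \/ w = removelast c1) /\ (w = c2 \/ w = removelast c2) /\
               q = pt (pos w)).

Definition tree_adj (u v : list nat) : Prop :=
  (exists i, v = u ++ [i]) \/ (exists i, u = v ++ [i]).

Definition is_path (t : tree) (l : list (list nat)) : Prop :=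
  Forall (is_vertex t) l /\
  forall k, (S k < length l)%nat -> tree_adj (nth k l []) (nth (S k) l []).

Definition monotone_path (pos : list nat -> Z * Z) (l : list (list nat)) : Prop :=
  exists d1 d2 : R, (d1, d2) <> (0, 0) /\
    forall k, (S k < length l)%nat ->
      d1 * IZR (fst (pos (nth k l []))) + d2 * IZR (snd (pos (nth k l [])))
      < d1 * IZR (fst (pos (nth (S k) l []))) + d2 * IZR (snd (pos (nth (S k) l []))).

Definition monotone_drawing (t : tree) (pos : list nat -> Z * Z) : Prop :=
  forall u v, is_vertex t u -> is_vertex t v ->
    exists l, is_path t l /\ hd_error l = Some u /\ last l [] = v /\
              monotone_path pos l.

Definition respects_order (t : tree) (pos : list nat -> Z * Z) : Prop :=
  forall u i j, is_vertex t (u ++ [j]) -> (i < j)%nat ->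
    let a := pos u in let b := pos (u ++ [i]) in let c := pos (u ++ [j]) in
    ((fst b - fst a) * (snd c - snd a) - (snd b - snd a) * (fst c - fst a) > 0)%Z.

(* Main.v *)
Require Import Defs.
From Stdlib Require Import Reals ZArith List.
Import ListNotations.
From Stdlib Require Import Lra Lia.
Require Import Defs.
Open Scope R_scope.


Lemma cos_ub_eq a: cos_ub a = 1 - a^2/2 + a^4/24 - a^6/720 + a^8/40320.
Proof. unfold cos_ub, cos_approx, cos_term. cbn -[Factorial.fact INR pow].
repeat rewrite ?fact_simpl, ?mult_INR. cbn -[pow]. field. Qed.
Lemma sin_lb_eq a: sin_lb a = a - a^3/6 + a^5/120 - a^7/5040.
Proof. unfold sin_lb, sin_approx, sin_term. cbn -[Factorial.fact INR pow].
repeat rewrite ?fact_simpl, ?mult_INR. cbn -[pow]. field. Qed.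

Lemma tan_gt_id x : 0 < x < PI/2 -> x < tan x.
Proof.
intros [H1 H2].
assert (HP:=PI_4). assert (HP2:=PI2_3_2).
assert (Hc: 0 < cos x) by (apply cos_gt_0; lra).
destruct (SIN x) as [Hs _]; try lra.
destruct (COS x) as [_ Hc2]; try lra.
rewrite sin_lb_eq in Hs. rewrite cos_ub_eq in Hc2.
unfold tan. apply Rmult_lt_reg_r with (cos x); auto.
unfold Rdiv. rewrite Rmult_assoc, Rinv_l by lra. rewrite Rmult_1_r.
assert (x * cos x <= x * (1 - x^2/2 + x^4/24 - x^6/720 + x^8/40320)) by (apply Rmult_le_compat_l; lra).
assert (Hu: x^2 < 4) by nra.
assert (0 < x^3 * (1/3 - x^2/30 + x^4/840 - x^6/40320)).
{ apply Rmult_lt_0_compat. apply pow_lt; lra.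
  assert (0 <= x^4) by (apply pow_le; lra). assert (x^4 < 16) by nra.
  assert (x^6 < 64) by nra. lra. }
nra.
Qed.

Lemma tan_ge0 x : 0 <= x < PI/2 -> 0 <= tan x.
Proof. intros [H1 H2]. destruct (Req_dec x 0) as [->|]. rewrite tan_0; lra.
left; apply tan_gt_0; lra. Qed.

Lemma tan_diff t1 t2 : 0 <= t1 -> t1 < t2 -> t2 < PI/2 -> tan t1 + (t2 - t1) < tan t2.
Proof.
intros H1 H2 H3. assert (HP2:=PI2_3_2).
set (w := t2 - t1). assert (Hw: t2 = t1 + w) by (unfold w; ring).
assert (c1: 0 < cos t1) by (apply cos_gt_0; lra).
assert (cw: 0 < cos w) by (apply cos_gt_0; unfold w; lra).
assert (c2: 0 < cos t2) by (apply cos_gt_0; lra).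
assert (a0 := tan_ge0 t1 ltac:(lra)).
assert (b0: w < tan w) by (apply tan_gt_id; unfold w; lra).
assert (Hab: 0 < 1 - tan t1 * tan w).
{ unfold tan. replace (1 - sin t1 / cos t1 * (sin w / cos w)) with
   ((cos t1 * cos w - sin t1 * sin w) / (cos t1 * cos w)) by (field; lra).
  rewrite <- cos_plus, <- Hw. apply Rdiv_lt_0_compat. lra. apply Rmult_lt_0_compat; lra. }
rewrite Hw in c2 |- *. rewrite tan_plus by lra.
assert (Hab1: 1 - tan t1 * tan w <= 1) by nra.
apply Rlt_le_trans with (tan t1 + tan w). lra.
apply Rmult_le_reg_r with (1 - tan t1 * tan w); auto.
unfold Rdiv; rewrite Rmult_assoc, Rinv_l by lra. nra.
Qed.

Lemma atan_lt_of t s : -PI/2 < t < PI/2 -> s < tan t -> atan s < t.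
Proof. intros Ht Hs. rewrite <- (atan_tan t) by lra. now apply atan_increasing. Qed.
Lemma lt_atan_of t s : -PI/2 < t < PI/2 -> tan t < s -> t < atan s.
Proof. intros Ht Hs. rewrite <- (atan_tan t) by lra. now apply atan_increasing. Qed.

Lemma atan_half_lt : atan (1/2) < 1/2.
Proof. assert (H:=atan_bound (1/2)).
assert (0 < atan (1/2)) by (rewrite <- atan_0; apply atan_increasing; lra).
rewrite <- (tan_atan (1/2)) at 2. apply tan_gt_id. lra. Qed.

Lemma atan_half_big : PI/4 < 2 * atan (1/2).
Proof. assert (H:=Machin_2_3). replace (1/2) with (/2) by field.
assert (atan (/3) < atan (/2)) by (apply atan_increasing; lra). lra. Qed.

Lemma atan_half_pos : 0 < atan (1/2).
Proof. rewrite <- atan_0; apply atan_increasing; lra. Qed.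

Lemma Zceil_spec x : x <= IZR (Zceil x) < x + 1.
Proof. change (Zceil x) with (- Int_part (-x))%Z. rewrite opp_IZR. destruct (base_Int_part (-x)). lra. Qed.
Lemma Zfloor_spec x : IZR (Zfloor x) <= x < IZR (Zfloor x) + 1.
Proof. change (Zfloor x) with (Int_part x). destruct (base_Int_part x). lra. Qed.

Lemma Q1 s1 s2 : 0 <= s1 -> s1 < s2 -> s2 <= PI/4 -> s2 - s1 <= atan (1/2) ->
  let d := Zceil (1 / (s2 - s1)) in let y := Zfloor (tan s1 * IZR d + 1) in
  (1 <= d)%Z /\ (1 <= y <= d)%Z /\ IZR d <= (PI/2)/(s2-s1) /\
  s1 < atan (IZR y / IZR d) < s2.
Proof.
intros H1 H2 H3 H4 d y.
assert (HP2:=PI2_3_2). assert (HP4 := PI_4). assert (Ha:=atan_half_lt).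
set (w := s2 - s1) in *. assert (Hw: 0 < w) by (unfold w; lra).
destruct (Zceil_spec (1/w)) as [Hd1 Hd2]. fold d in Hd1, Hd2.
assert (Hiw: 2 < 1/w). { apply Rmult_lt_reg_r with w; auto. unfold Rdiv; rewrite Rmult_assoc, Rinv_l by lra. lra. }
assert (Hd: (1 <= d)%Z). { apply le_IZR. lra. }
assert (HdR: 1 <= IZR d) by (apply IZR_le; lia).
assert (Ht0 := tan_ge0 s1 ltac:(lra)).
assert (Ht1: tan s1 < 1). { rewrite <- tan_PI4. apply tan_increasing; lra. }
destruct (Zfloor_spec (tan s1 * IZR d + 1)) as [Hy1 Hy2]. fold y in Hy1, Hy2.
assert (HyR: 0 < IZR y) by nra.
assert (Hy: (1 <= y)%Z) by (assert (0 < y)%Z by (apply lt_IZR; lra); lia).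
assert (Hyd: (y <= d)%Z). { assert (IZR y < IZR d + 1) by nra.
  assert (y < d + 1)%Z by (apply lt_IZR; rewrite plus_IZR; lra). lia. }
split; [exact Hd|]. split; [lia|]. split.
{ apply Rmult_le_reg_r with w; auto. unfold Rdiv. rewrite Rmult_assoc, Rinv_l by lra.
  assert (1/w*w = 1) by (field; lra). nra. }
assert (HdP: 0 < IZR d) by lra.
split.
- apply lt_atan_of. lra. apply Rmult_lt_reg_r with (IZR d); auto.
  unfold Rdiv; rewrite Rmult_assoc, Rinv_l by lra. lra.
- apply atan_lt_of. lra.
  assert (Hdf := tan_diff s1 s2 H1 H2 ltac:(lra)). fold w in Hdf.
  assert (w * (1/w) = 1) by (field; lra).
  assert (1/IZR d <= w). { apply Rmult_le_reg_r with (IZR d); auto.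
    replace (1/IZR d * IZR d) with 1 by (field; lra). nra. }
  assert (IZR y / IZR d <= tan s1 + 1 / IZR d).
  { apply Rmult_le_reg_r with (IZR d); auto.
    replace ((tan s1 + 1 / IZR d) * IZR d) with (tan s1 * IZR d + 1) by (field; lra).
    unfold Rdiv; rewrite Rmult_assoc, Rinv_l by lra. lra. }
  lra.
Qed.

Lemma le_div_of c a w : 0 < w -> c * w <= a -> c <= a / w.
Proof. intros Hw H. apply Rmult_le_reg_r with w; auto.
replace (a / w * w) with a by (field; lra). lra. Qed.

Lemma P1_spec t1 t2 : 0 <= t1 -> t1 < t2 -> t2 <= PI/2 ->
  (1 <= fst (P1 t1 t2))%Z /\ (1 <= snd (P1 t1 t2))%Z /\
  IZR (fst (P1 t1 t2)) <= (PI/2)/(t2-t1) /\ IZR (snd (P1 t1 t2)) <= (PI/2)/(t2-t1) /\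
  t1 < atan (IZR (snd (P1 t1 t2)) / IZR (fst (P1 t1 t2))) < t2.
Proof.
intros H1 H2 H3.
assert (HP2:=PI2_3_2). assert (HP4 := PI_4). assert (Ha:=atan_half_lt).
assert (Hb:=atan_half_big). assert (Hc := atan_half_pos).
assert (Hw: 0 < t2 - t1) by lra.
unfold P1.
destruct (Rlt_dec (PI/4) (t2 - t1)).
{ simpl. replace (1/1) with 1 by field. rewrite atan_1.
  repeat split; try lia; try lra; apply le_div_of; lra. }
destruct (Rlt_dec (atan (1/2)) (t2 - t1)).
{ destruct (Rle_dec (PI/4) t1); [|destruct (Rle_dec (atan (1/2)) t1)]; simpl.
  - replace (2/1) with (/ (1/2)) by field. rewrite atan_inv by lra.
    repeat split; try lia; try lra; apply le_div_of; lra.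
  - replace (1/1) with 1 by field. rewrite atan_1.
    repeat split; try lia; try lra; apply le_div_of; lra.
  - repeat split; try lia; try lra; apply le_div_of; lra. }
destruct (Rle_dec t2 (PI/4)).
{ destruct (Q1 t1 t2 H1 H2 r ltac:(lra)) as (A1 & A2 & A3 & A4). simpl.
  repeat split; try lia; try lra.
  assert (IZR (Zfloor (tan t1 * IZR (Zceil (1 / (t2 - t1))) + 1)) <= IZR (Zceil (1 / (t2 - t1))))
    by (apply IZR_le; lia). lra. }
destruct (Rlt_dec t1 (PI/4)).
{ simpl. replace (1/1) with 1 by field. rewrite atan_1.
  repeat split; try lia; try lra; apply le_div_of; lra. }
simpl.
destruct (Q1 (PI/2 - t2) (PI/2 - t1) ltac:(lra) ltac:(lra) ltac:(lra) ltac:(lra)) as (A1 & A2 & A3 & A4).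
replace (PI/2 - t1 - (PI/2 - t2)) with (t2 - t1) in * by ring.
set (d := Zceil (1 / (t2 - t1))) in *.
set (x := Zfloor (tan (PI / 2 - t2) * IZR d + 1)) in *.
assert (IZR x <= IZR d) by (apply IZR_le; lia).
assert (0 < IZR x) by (apply IZR_lt; lia).
assert (0 < IZR d) by (apply IZR_lt; lia).
repeat split; try lia; try lra.
- replace (IZR d / IZR x) with (/ (IZR x / IZR d)) by (field; lra).
  rewrite atan_inv by (apply Rdiv_lt_0_compat; lra). lra.
- replace (IZR d / IZR x) with (/ (IZR x / IZR d)) by (field; lra).
  rewrite atan_inv by (apply Rdiv_lt_0_compat; lra). lra.
Qed.


Definition cone (a b : R) (z : R * R) : Prop :=
  0 < fst z /\ 0 < snd z /\ a < atan (snd z / fst z) < b.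

Lemma atan_le x y : x <= y -> atan x <= atan y.
Proof. intros [H|H]. left; now apply atan_increasing. subst; lra. Qed.

Lemma cone_mono a b a' b' z : a <= a' -> b' <= b -> cone a' b' z -> cone a b z.
Proof. unfold cone; intros; lra. Qed.

Lemma mediant x1 y1 x2 y2 : 0 < x1 -> 0 < x2 -> y1 / x1 <= y2 / x2 ->
  y1 / x1 <= (y1 + y2) / (x1 + x2) <= y2 / x2.
Proof.
intros H1 H2 H.
assert (y1 * x2 <= y2 * x1).
{ apply Rmult_le_compat_r with (r := x1 * x2) in H; [|nra].
  replace (y1 / x1 * (x1 * x2)) with (y1 * x2) in H by (field; lra).
  replace (y2 / x2 * (x1 * x2)) with (y2 * x1) in H by (field; lra). lra. }
split.
- apply Rmult_le_reg_r with (x1 * (x1 + x2)). nra.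
  replace (y1 / x1 * (x1 * (x1 + x2))) with (y1 * (x1 + x2)) by (field; lra).
  replace ((y1 + y2) / (x1 + x2) * (x1 * (x1 + x2))) with ((y1 + y2) * x1) by (field; lra). nra.
- apply Rmult_le_reg_r with (x2 * (x1 + x2)). nra.
  replace (y2 / x2 * (x2 * (x1 + x2))) with (y2 * (x1 + x2)) by (field; lra).
  replace ((y1 + y2) / (x1 + x2) * (x2 * (x1 + x2))) with ((y1 + y2) * x2) by (field; lra). nra.
Qed.

Lemma cone_add a b x1 y1 x2 y2 : cone a b (x1, y1) -> cone a b (x2, y2) ->
  cone a b (x1 + x2, y1 + y2).
Proof.
unfold cone; simpl; intros (H1 & H2 & H3) (H4 & H5 & H6).
split; [lra|]. split; [lra|].
destruct (Rle_dec (y1/x1) (y2/x2)) as [Hl|Hl].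
- destruct (mediant x1 y1 x2 y2 H1 H4 Hl) as [m1 m2].
  apply atan_le in m1; apply atan_le in m2. lra.
- assert (Hl': y2/x2 <= y1/x1) by lra.
  destruct (mediant x2 y2 x1 y1 H4 H1 Hl') as [m1 m2].
  rewrite (Rplus_comm x1), (Rplus_comm y1).
  apply atan_le in m1; apply atan_le in m2. lra.
Qed.

Lemma cone_scale a b l x y : 0 < l -> cone a b (x, y) -> cone a b (l * x, l * y).
Proof.
unfold cone; simpl; intros Hl (H1 & H2 & H3).
replace (l * y / (l * x)) with (y / x) by (field; lra).
split; [nra|]. split; [nra|]. auto.
Qed.

Lemma cone_disj a b a' b' z : b <= a' -> cone a b z -> cone a' b' z -> False.
Proof. unfold cone; intros; lra. Qed.

Lemma cone_ineq_gt b c x y : 0 <= b <= PI/2 -> cone b c (x, y) ->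
  0 < y * cos b - x * sin b.
Proof.
unfold cone; simpl; intros Hb (H1 & H2 & H3 & H4).
assert (Hat := atan_bound (y/x)).
assert (Hb2: b < PI/2) by lra.
assert (Hc: 0 < cos b) by (apply cos_gt_0; lra).
assert (tan b < y / x).
{ destruct (Rlt_le_dec (tan b) (y/x)) as [|Hle]; auto.
  apply atan_le in Hle. rewrite atan_tan in Hle by lra. lra. }
unfold tan in H.
apply Rmult_lt_compat_r with (r := x * cos b) in H; [|nra].
replace (sin b / cos b * (x * cos b)) with (x * sin b) in H by (field; lra).
replace (y / x * (x * cos b)) with (y * cos b) in H by (field; lra). lra.
Qed.

Lemma cone_ineq_lt a b x y : 0 <= b <= PI/2 -> cone a b (x, y) ->
  y * cos b - x * sin b < 0.
Proof.
unfold cone; simpl; intros Hb (H1 & H2 & H3 & H4).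
assert (Hat := atan_bound (y/x)).
destruct (Req_dec b (PI/2)) as [->|Hne].
{ rewrite cos_PI2, sin_PI2. lra. }
assert (Hb2: b < PI/2) by lra.
assert (Hc: 0 < cos b) by (apply cos_gt_0; lra).
assert (y / x < tan b).
{ destruct (Rlt_le_dec (y/x) (tan b)) as [|Hle]; auto.
  apply atan_le in Hle. rewrite atan_tan in Hle by lra. lra. }
unfold tan in H.
apply Rmult_lt_compat_r with (r := x * cos b) in H; [|nra].
replace (sin b / cos b * (x * cos b)) with (x * sin b) in H by (field; lra).
replace (y / x * (x * cos b)) with (y * cos b) in H by (field; lra). lra.
Qed.

Lemma cone_cross a b a' b' x1 y1 x2 y2 : b <= a' -> cone a b (x1, y1) -> cone a' b' (x2, y2) ->
  0 < x1 * y2 - y1 * x2.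
Proof.
unfold cone; simpl; intros Hb (H1 & H2 & H3 & H4) (H5 & H6 & H7 & H8).
assert (y1 / x1 < y2 / x2).
{ destruct (Rlt_le_dec (y1/x1) (y2/x2)) as [|Hle]; auto.
  apply atan_le in Hle. lra. }
apply Rmult_lt_compat_r with (r := x1 * x2) in H; [|nra].
replace (y1 / x1 * (x1 * x2)) with (y1 * x2) in H by (field; lra).
replace (y2 / x2 * (x1 * x2)) with (y2 * x1) in H by (field; lra). lra.
Qed.


Record st := mkst { st_t : tree; st_a1 : R; st_a2 : R; st_x : Z; st_y : Z }.

Fixpoint descend (t : tree) (a1 a2 : R) (x y : Z) (p : list nat) : option st :=
  match p with
  | [] => Some (mkst t a1 a2 x y)
  | i :: p' =>
      match t with Node ts =>
        match nth_error ts i, nth_error (child_angles a1 a2 (INR (tsize t)) a1 ts) i with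
        | Some c, Some (b1, b2) =>
            let (dx, dy) := P1 b1 b2 in descend c b1 b2 (x + dx)%Z (y + dy)%Z p'
        | _, _ => None
        end
      end
  end.

Definition dsc (s : st) (p : list nat) := descend (st_t s) (st_a1 s) (st_a2 s) (st_x s) (st_y s) p.

Lemma place_descend p q t a1 a2 x y s : descend t a1 a2 x y p = Some s ->
  place t a1 a2 x y (p ++ q) = place (st_t s) (st_a1 s) (st_a2 s) (st_x s) (st_y s) q.
Proof.
revert t a1 a2 x y. induction p as [|i p IH]; intros [ts] a1 a2 x y H; simpl in *.
- injection H as <-. reflexivity.
- destruct (nth_error ts i) as [c|]; [|discriminate].
  destruct (nth_error _ i) as [[b1 b2]|]; [|discriminate].
  destruct (P1 b1 b2). now apply IH.
Qed.

Lemma pos_descend p t a1 a2 x y s : descend t a1 a2 x y p = Some s ->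
  place t a1 a2 x y p = (st_x s, st_y s).
Proof. intros H. rewrite <- (app_nil_r p). rewrite (place_descend _ _ _ _ _ _ _ _ H).
reflexivity. Qed.

Lemma descend_app p q t a1 a2 x y : descend t a1 a2 x y (p ++ q) =
  match descend t a1 a2 x y p with Some s => dsc s q | None => None end.
Proof.
revert t a1 a2 x y. induction p as [|i p IH]; intros [ts] a1 a2 x y; simpl in *.
- reflexivity.
- destruct (nth_error ts i) as [c|]; [|reflexivity].
  destruct (nth_error _ i) as [[b1 b2]|]; [|reflexivity].
  destruct (P1 b1 b2). now apply IH.
Qed.

Lemma child_angles_length a1 a2 nu s ts : length (child_angles a1 a2 nu s ts) = length ts.
Proof. revert s; induction ts; simpl; auto. Qed.

Lemma subtree_descend p t a1 a2 x y :
  subtree t p = option_map st_t (descend t a1 a2 x y p).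
Proof.
revert t a1 a2 x y. induction p as [|i p IH]; intros [ts] a1 a2 x y; simpl in *.
- reflexivity.
- destruct (nth_error ts i) as [c|] eqn:E.
  + assert (i < length ts)%nat by (apply nth_error_Some; congruence).
    destruct (nth_error (child_angles _ _ _ _ _) i) as [[b1 b2]|] eqn:E2.
    * destruct (P1 b1 b2). apply IH.
    * apply nth_error_None in E2. rewrite child_angles_length in E2. lia.
  + reflexivity.
Qed.

Lemma vertex_descend p t a1 a2 x y : is_vertex t p ->
  exists s, descend t a1 a2 x y p = Some s.
Proof. unfold is_vertex. rewrite (subtree_descend p t a1 a2 x y).
destruct descend; simpl; [eauto|congruence]. Qed.

Lemma descend_vertex p t a1 a2 x y s : descend t a1 a2 x y p = Some s -> is_vertex t p.
Proof. unfold is_vertex. rewrite (subtree_descend p t a1 a2 x y). intros ->; simpl; congruence. Qed.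

Lemma vertex_prefix t p q : is_vertex t (p ++ q) -> is_vertex t p.
Proof. intros H. destruct (vertex_descend _ t 0 0 0%Z 0%Z H) as [s Hs].
rewrite descend_app in Hs. destruct (descend t 0 0 0%Z 0%Z p) eqn:E; [|discriminate].
eapply descend_vertex; eauto. Qed.

Definition psum (l : list tree) : nat := list_sum (map tsize l).

Lemma child_angles_nth a1 a2 nu ts : forall s i c b,
  nth_error ts i = Some c -> nth_error (child_angles a1 a2 nu s ts) i = Some b ->
  b = (s + (a2 - a1) * INR (psum (firstn i ts)) / (nu - 1),
       s + (a2 - a1) * INR (psum (firstn (S i) ts)) / (nu - 1)).
Proof.
unfold psum. induction ts as [|c0 ts IH]; intros s [|i] c b H1 H2; simpl in *; try discriminate.
- injection H1 as ->. injection H2 as <-. f_equal.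
  + unfold Rdiv; ring.
  + rewrite Nat.add_0_r. reflexivity.
- rewrite (IH _ i c b H1 H2). f_equal; rewrite plus_INR; unfold Rdiv; ring.
Qed.

Lemma psum_firstn_le ts : forall k m, (k <= m)%nat -> (psum (firstn k ts) <= psum (firstn m ts))%nat.
Proof. unfold psum. induction ts as [|c ts IH]; intros [|k] [|m] H; simpl; try lia.
specialize (IH k m ltac:(lia)). lia. Qed.

Lemma psum_firstn_tot ts k : (psum (firstn k ts) <= psum ts)%nat.
Proof. rewrite <- (firstn_all ts) at 2. destruct (Nat.le_ge_cases k (length ts)).
- apply psum_firstn_le; auto.
- rewrite firstn_all2 by auto. rewrite firstn_all. lia. Qed.

Lemma psum_firstn_S ts i c : nth_error ts i = Some c ->
  psum (firstn (S i) ts) = (psum (firstn i ts) + tsize c)%nat.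
Proof. unfold psum. revert i; induction ts as [|c0 ts IH]; intros [|i] H; simpl in *; try discriminate.
- injection H as ->. lia.
- rewrite (IH i H). lia. Qed.

Lemma tsize_pos t : (1 <= tsize t)%nat.
Proof. destruct t; simpl; lia. Qed.

Definition good (a1 a2 : R) := 0 <= a1 /\ a1 < a2 /\ a2 <= PI/2.
Definition Bnd (t : tree) (a1 a2 : R) := (INR (tsize t) - 1) * (PI/2) / (a2 - a1).

Lemma tsize_node ts : INR (tsize (Node ts)) - 1 = INR (psum ts).
Proof. simpl tsize. rewrite S_INR. unfold psum. ring. Qed.

Lemma step_facts ts a1 a2 i c b1 b2 : good a1 a2 -> nth_error ts i = Some c ->
  nth_error (child_angles a1 a2 (INR (tsize (Node ts))) a1 ts) i = Some (b1, b2) ->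
  a1 <= b1 /\ b1 < b2 /\ b2 <= a2 /\ Bnd c b1 b2 + (PI/2) / (b2 - b1) = Bnd (Node ts) a1 a2.
Proof.
intros Hg H1 H2. pose proof (child_angles_nth _ _ _ _ _ _ _ _ H1 H2) as E.
rewrite tsize_node in E. apply pair_equal_spec in E. destruct E as [E1 E2].
rewrite (psum_firstn_S _ _ _ H1) in E2. rewrite plus_INR in E2.
assert (Htot := psum_firstn_tot ts (S i)). rewrite (psum_firstn_S _ _ _ H1) in Htot.
assert (Hsz := tsize_pos c).
apply le_INR in Htot. rewrite plus_INR in Htot. apply le_INR in Hsz. simpl in Hsz.
set (P := INR (psum (firstn i ts))) in *. set (T := INR (psum ts)) in *.
set (sz := INR (tsize c)) in *.
assert (HP: 0 <= P) by apply pos_INR.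
destruct Hg as (g1 & g2 & g3).
assert (HT: 0 < T) by lra.
set (u := (a2 - a1) / T).
assert (Hu: 0 < u) by (unfold u; apply Rdiv_lt_0_compat; lra).
assert (E1': b1 = a1 + u * P) by (rewrite E1; unfold u, Rdiv; ring).
assert (E2': b2 = a1 + u * (P + sz)) by (rewrite E2; unfold u, Rdiv; ring).
assert (HuT: u * T = a2 - a1) by (unfold u; field; lra).
split; [nra|]. split; [nra|]. split; [nra|].
unfold Bnd. rewrite tsize_node. fold T. fold sz.
replace (b2 - b1) with (u * sz) by (rewrite E1', E2'; ring).
replace (a2 - a1) with (u * T) by auto.
field. split; lra.
Qed.

Lemma order_facts ts a1 a2 i j ci cj bi1 bi2 bj1 bj2 : good a1 a2 -> (i < j)%nat ->
  nth_error ts i = Some ci -> nth_error ts j = Some cj ->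
  nth_error (child_angles a1 a2 (INR (tsize (Node ts))) a1 ts) i = Some (bi1, bi2) ->
  nth_error (child_angles a1 a2 (INR (tsize (Node ts))) a1 ts) j = Some (bj1, bj2) ->
  bi2 <= bj1.
Proof.
intros Hg Hij H1 H2 H3 H4.
pose proof (child_angles_nth _ _ _ _ _ _ _ _ H1 H3) as E.
pose proof (child_angles_nth _ _ _ _ _ _ _ _ H2 H4) as F.
rewrite tsize_node in E, F. apply pair_equal_spec in E. apply pair_equal_spec in F.
destruct E as [E1 E2]. destruct F as [F1 F2].
assert (Hle := psum_firstn_le ts (S i) j Hij). apply le_INR in Hle.
assert (Htot := psum_firstn_tot ts (S i)). apply le_INR in Htot.
assert (Hsz := tsize_pos ci). 
rewrite (psum_firstn_S _ _ _ H1) in Htot. apply le_INR in Hsz. rewrite plus_INR in Htot. simpl in Hsz.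
assert (HP: 0 <= INR (psum (firstn i ts))) by apply pos_INR.
destruct Hg as (g1 & g2 & g3).
assert (HT: 0 < INR (psum ts)) by lra.
rewrite E2, F1. apply Rplus_le_compat_l. unfold Rdiv.
apply Rmult_le_compat_r. left; apply Rinv_0_lt_compat; lra.
apply Rmult_le_compat_l; lra.
Qed.

Lemma step_inv t a1 a2 x y i p s : descend t a1 a2 x y (i :: p) = Some s ->
  exists ts c b1 b2, t = Node ts /\ nth_error ts i = Some c /\
    nth_error (child_angles a1 a2 (INR (tsize t)) a1 ts) i = Some (b1, b2) /\
    descend c b1 b2 (x + fst (P1 b1 b2))%Z (y + snd (P1 b1 b2))%Z p = Some s.
Proof.
destruct t as [ts]. simpl. destruct (nth_error ts i) as [c|] eqn:E1; [|discriminate].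
destruct (nth_error (child_angles _ _ _ _ _) i) as [[b1 b2]|] eqn:E2; [|discriminate].
destruct (P1 b1 b2) as [dx dy] eqn:E3. intros H. exists ts, c, b1, b2.
rewrite E3. simpl. repeat split; auto.
Qed.

Definition dvec (x y : Z) (s : st) : R * R := (IZR (st_x s) - IZR x, IZR (st_y s) - IZR y).

Lemma cone_dvec_add a b x y dx dy s :
  cone a b (IZR dx, IZR dy) -> cone a b (dvec (x + dx) (y + dy) s) ->
  cone a b (dvec x y s).
Proof. unfold dvec. intros H1 H2. rewrite !plus_IZR in H2.
pose proof (cone_add _ _ _ _ _ _ H1 H2) as H. simpl in H.
replace (IZR (st_x s) - IZR x) with (IZR dx + (IZR (st_x s) - (IZR x + IZR dx))) by ring.
replace (IZR (st_y s) - IZR y) with (IZR dy + (IZR (st_y s) - (IZR y + IZR dy))) by ring.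
exact H. Qed.

Lemma P1_cone b1 b2 : good b1 b2 -> cone b1 b2 (IZR (fst (P1 b1 b2)), IZR (snd (P1 b1 b2))).
Proof. intros (g1 & g2 & g3). destruct (P1_spec b1 b2 g1 g2 g3) as (h1 & h2 & h3 & h4 & h5).
unfold cone; simpl. split; [apply IZR_lt; lia|]. split; [apply IZR_lt; lia|]. exact h5. Qed.

Lemma inv p : forall t a1 a2 x y s, good a1 a2 -> descend t a1 a2 x y p = Some s ->
  a1 <= st_a1 s /\ st_a2 s <= a2 /\ good (st_a1 s) (st_a2 s) /\
  (p <> [] -> cone a1 a2 (dvec x y s)) /\
  IZR (st_x s) - IZR x + Bnd (st_t s) (st_a1 s) (st_a2 s) <= Bnd t a1 a2 /\
  IZR (st_y s) - IZR y + Bnd (st_t s) (st_a1 s) (st_a2 s) <= Bnd t a1 a2 /\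
  (x <= st_x s)%Z /\ (y <= st_y s)%Z.
Proof.
induction p as [|i p IH]; intros t a1 a2 x y s Hg H.
- simpl in H. injection H as <-. simpl.
  split; [lra|]. split; [lra|]. split; [auto|]. split; [intros HH; now contradiction HH|].
  split; [lra|]. split; [lra|]. lia.
- destruct (step_inv _ _ _ _ _ _ _ _ H) as (ts & c & b1 & b2 & -> & E1 & E2 & E3).
  destruct (step_facts _ _ _ _ _ _ _ Hg E1 E2) as (f1 & f2 & f3 & f4).
  assert (Hg' : good b1 b2) by (destruct Hg as (?&?&?); repeat split; lra).
  destruct (P1_spec b1 b2 ltac:(apply Hg') f2 ltac:(apply Hg')) as (h1 & h2 & h3 & h4 & h5).
  destruct (IH _ _ _ _ _ _ Hg' E3) as (i1 & i2 & i3 & i4 & i5 & i6 & i7 & i8).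
  rewrite plus_IZR in i5, i6.
  split; [lra|]. split; [lra|]. split; [auto|]. split.
  + intros _. apply cone_mono with b1 b2; try lra.
    destruct p as [|j p].
    * simpl in E3. injection E3 as <-. unfold dvec. simpl. rewrite !plus_IZR.
      replace (IZR x + IZR (fst (P1 b1 b2)) - IZR x) with (IZR (fst (P1 b1 b2))) by ring.
      replace (IZR y + IZR (snd (P1 b1 b2)) - IZR y) with (IZR (snd (P1 b1 b2))) by ring.
      apply P1_cone; auto.
    * apply cone_dvec_add with (fst (P1 b1 b2)) (snd (P1 b1 b2)).
      -- apply P1_cone; auto.
      -- apply i4. discriminate.
  + split; [lra|]. split; [lra|]. lia.
Qed.


Lemma branch t a1 a2 x y i p s : good a1 a2 -> descend t a1 a2 x y (i :: p) = Some s ->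
  exists s1, descend t a1 a2 x y [i] = Some s1 /\ dsc s1 p = Some s /\
    cone (st_a1 s1) (st_a2 s1) (dvec x y s) /\ good (st_a1 s1) (st_a2 s1) /\
    a1 <= st_a1 s1 /\ st_a2 s1 <= a2 /\
    cone (st_a1 s1) (st_a2 s1) (dvec x y s1).
Proof.
intros Hg H. destruct (step_inv _ _ _ _ _ _ _ _ H) as (ts & c & b1 & b2 & -> & E1 & E2 & E3).
destruct (step_facts _ _ _ _ _ _ _ Hg E1 E2) as (f1 & f2 & f3 & f4).
assert (Hg' : good b1 b2) by (destruct Hg as (?&?&?); repeat split; lra).
exists (mkst c b1 b2 (x + fst (P1 b1 b2)) (y + snd (P1 b1 b2))).
assert (Hc1 : cone b1 b2 (dvec x y (mkst c b1 b2 (x + fst (P1 b1 b2)) (y + snd (P1 b1 b2))))).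
{ unfold dvec. simpl. rewrite !plus_IZR.
  replace (IZR x + IZR (fst (P1 b1 b2)) - IZR x) with (IZR (fst (P1 b1 b2))) by ring.
  replace (IZR y + IZR (snd (P1 b1 b2)) - IZR y) with (IZR (snd (P1 b1 b2))) by ring.
  apply P1_cone; auto. }
split.
{ simpl. rewrite E1. simpl in E2. rewrite E2. destruct (P1 b1 b2); reflexivity. }
split; [exact E3|]. simpl. split.
- destruct p as [|j p].
  + simpl in E3. injection E3 as <-. exact Hc1.
  + apply cone_dvec_add with (fst (P1 b1 b2)) (snd (P1 b1 b2)).
    * apply P1_cone; auto.
    * destruct (inv _ _ _ _ _ _ _ Hg' E3) as (_ & _ & _ & i4 & _). apply i4. discriminate.
- split; [exact Hg'|]. split; [lra|]. split; [lra|]. exact Hc1.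
Qed.

Lemma order_child t a1 a2 x y i j si sj : good a1 a2 -> (i < j)%nat ->
  descend t a1 a2 x y [i] = Some si -> descend t a1 a2 x y [j] = Some sj ->
  st_a2 si <= st_a1 sj.
Proof.
intros Hg Hij Hi Hj.
destruct (step_inv _ _ _ _ _ _ _ _ Hi) as (ts & c & b1 & b2 & -> & E1 & E2 & E3).
destruct (step_inv _ _ _ _ _ _ _ _ Hj) as (ts' & c' & b1' & b2' & Heq & E1' & E2' & E3').
injection Heq as <-. simpl in E3, E3'. injection E3 as <-. injection E3' as <-. simpl.
eapply order_facts; eauto.
Qed.

Lemma lcp (u v : list nat) : exists w r1 r2, u = w ++ r1 /\ v = w ++ r2 /\
  (r1 = [] \/ r2 = [] \/ exists i j r1' r2', r1 = i :: r1' /\ r2 = j :: r2' /\ i <> j).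
Proof.
revert v; induction u as [|a u IH]; intros v.
- exists [], [], v. simpl. auto.
- destruct v as [|b v].
  + exists [], (a :: u), []. simpl. auto.
  + destruct (Nat.eq_dec a b) as [<-|Hne].
    * destruct (IH v) as (w & r1 & r2 & -> & -> & H). exists (a :: w), r1, r2. simpl. auto.
    * exists [], (a :: u), (b :: v). simpl. split; [reflexivity|]. split; [reflexivity|]. right; right. exists a, b, u, v. auto.
Qed.

Definition dd (s0 s : st) := dvec (st_x s0) (st_y s0) s.

Lemma seg_branch s0 i r sc l qx qy s1 :
  good (st_a1 s0) (st_a2 s0) ->
  dsc s0 [i] = Some s1 ->
  dsc s0 (i :: r) = Some sc ->
  forall sp, dsc s0 (removelast (i :: r)) = Some sp ->
  0 <= l <= 1 ->
  qx = IZR (st_x sp) + l * (IZR (st_x sc) - IZR (st_x sp)) ->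
  qy = IZR (st_y sp) + l * (IZR (st_y sc) - IZR (st_y sp)) ->
  cone (st_a1 s1) (st_a2 s1) (qx - IZR (st_x s0), qy - IZR (st_y s0)) \/
  (r = [] /\ l = 0 /\ qx = IZR (st_x s0) /\ qy = IZR (st_y s0)).
Proof.
intros Hg H1 Hc sp Hp Hl Hqx Hqy.
destruct (branch _ _ _ _ _ _ _ _ Hg Hc) as (s1' & Hs1 & Hcr & Hcone & Hg1 & _ & _ & _).
unfold dsc in H1. rewrite H1 in Hs1. injection Hs1 as <-.
destruct r as [|k r] using rev_ind.
-
  simpl in Hp. injection Hp as <-. cbn in Hqx, Hqy.
  destruct (Req_dec l 0) as [->|Hl0].
  + right. repeat split; auto; lra.
  + left. unfold dvec in Hcone.
    replace (qx - IZR (st_x s0)) with (l * (IZR (st_x sc) - IZR (st_x s0))) by (rewrite Hqx; ring).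
    replace (qy - IZR (st_y s0)) with (l * (IZR (st_y sc) - IZR (st_y s0))) by (rewrite Hqy; ring).
    apply cone_scale; auto. lra.
- clear IHr. left.
  replace (removelast (i :: r ++ [k])) with (i :: r) in Hp
    by (rewrite app_comm_cons, removelast_last; reflexivity).
  destruct (branch _ _ _ _ _ _ _ _ Hg Hp) as (s1' & Hs1 & Hpr & Hcone1 & _ & _ & _ & _).
  unfold dsc in H1. rewrite H1 in Hs1. injection Hs1 as <-.
  destruct (inv _ _ _ _ _ _ _ Hg1 Hpr) as (j1 & j2 & j3 & _).
  assert (Hstep : dsc sp [k] = Some sc).
  { unfold dsc in Hc, Hp. rewrite app_comm_cons in Hc. rewrite descend_app in Hc.
    rewrite Hp in Hc. exact Hc. }
  destruct (inv _ _ _ _ _ _ _ j3 Hstep) as (_ & _ & _ & k4 & _).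
  specialize (k4 ltac:(discriminate)).
  apply (cone_mono (st_a1 s1) (st_a2 s1)) in k4; try lra.
  unfold dvec in Hcone1, k4.
  destruct (Req_dec l 0) as [->|Hl0].
  + replace (qx - IZR (st_x s0)) with (IZR (st_x sp) - IZR (st_x s0)) by (rewrite Hqx; ring).
    replace (qy - IZR (st_y s0)) with (IZR (st_y sp) - IZR (st_y s0)) by (rewrite Hqy; ring).
    exact Hcone1.
  + replace (qx - IZR (st_x s0)) with ((IZR (st_x sp) - IZR (st_x s0)) + l * (IZR (st_x sc) - IZR (st_x sp))) by (rewrite Hqx; ring).
    replace (qy - IZR (st_y s0)) with ((IZR (st_y sp) - IZR (st_y s0)) + l * (IZR (st_y sc) - IZR (st_y sp))) by (rewrite Hqy; ring).
    apply cone_add; auto. apply cone_scale; auto. lra.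
Qed.

Close Scope R_scope.

Fixpoint chain {A} (R : A -> A -> Prop) (l : list A) : Prop :=
  match l with
  | x :: ((y :: _) as l') => R x y /\ chain R l'
  | _ => True
  end.

Lemma chain_nth {A} (R : A -> A -> Prop) l d : chain R l ->
  forall k, S k < length l -> R (nth k l d) (nth (S k) l d).
Proof.
induction l as [|x l IH]; intros H k Hk; simpl in *; [lia|].
destruct l as [|y l]; simpl in *; [lia|].
destruct H as [H1 H2]. destruct k as [|k]; auto.
apply (IH H2 k). simpl. lia.
Qed.

Lemma chain_mono {A} (R R' : A -> A -> Prop) l : (forall a b, R a b -> R' a b) ->
  chain R l -> chain R' l.
Proof. intros HR. induction l as [|x l IH]; simpl; auto.
destruct l as [|y l]; auto. intros [H1 H2]. split; auto. Qed.

Lemma chain_join {A} (R : A -> A -> Prop) l1 x l2 :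
  chain R (l1 ++ [x]) -> chain R (x :: l2) -> chain R (l1 ++ x :: l2).
Proof.
induction l1 as [|a l1 IH]; simpl; auto.
destruct l1 as [|b l1]; simpl in *.
- intros [H1 _] H2. split; auto.
- intros [H1 H2] H3. split; [exact H1|]. apply (IH H2 H3).
Qed.

Fixpoint down (p r : list nat) : list (list nat) :=
  match r with [] => [p] | i :: r' => p :: down (p ++ [i]) r' end.
Fixpoint up (p r : list nat) : list (list nat) :=
  match r with [] => [p] | i :: r' => up (p ++ [i]) r' ++ [p] end.

Lemma down_hd p r : exists l, down p r = p :: l.
Proof. destruct r; simpl; eauto. Qed.
Lemma down_last p r : exists l, down p r = l ++ [p ++ r].
Proof. revert p; induction r as [|i r IH]; intros p; simpl.
- exists []. rewrite app_nil_r. reflexivity.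
- destruct (IH (p ++ [i])) as [l E]. rewrite E. exists (p :: l).
  rewrite <- app_assoc. reflexivity. Qed.
Lemma up_hd p r : exists l, up p r = (p ++ r) :: l.
Proof. revert p; induction r as [|i r IH]; intros p; simpl.
- exists []. rewrite app_nil_r. reflexivity.
- destruct (IH (p ++ [i])) as [l E]. rewrite E. exists (l ++ [p]).
  rewrite <- app_assoc. reflexivity. Qed.
Lemma up_last p r : exists l, up p r = l ++ [p].
Proof. destruct r as [|i r]; simpl. exists []; reflexivity. eauto. Qed.

Lemma down_in p r q : In q (down p r) -> exists s t, q = p ++ s /\ r = s ++ t.
Proof. revert p; induction r as [|i r IH]; intros p H; simpl in H.
- destruct H as [<-|[]]. exists [], []. rewrite app_nil_r. auto.
- destruct H as [<-|H].
  + exists [], (i :: r). rewrite app_nil_r. auto.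
  + destruct (IH _ H) as (s & t & -> & ->). exists (i :: s), t.
    rewrite <- app_assoc. auto. Qed.
Lemma up_in p r q : In q (up p r) -> exists s t, q = p ++ s /\ r = s ++ t.
Proof. revert p; induction r as [|i r IH]; intros p H; simpl in H.
- destruct H as [<-|[]]. exists [], []. rewrite app_nil_r. auto.
- apply in_app_or in H. destruct H as [H|[<-|[]]].
  + destruct (IH _ H) as (s & t & -> & ->). exists (i :: s), t.
    rewrite <- app_assoc. auto.
  + exists [], (i :: r). rewrite app_nil_r. auto. Qed.

Lemma down_chain (R : list nat -> list nat -> Prop) r : forall p,
  (forall s k t, r = s ++ k :: t -> R (p ++ s) (p ++ s ++ [k])) -> chain R (down p r).
Proof.
induction r as [|i r IH]; intros p H; simpl; auto.
destruct (down_hd (p ++ [i]) r) as [l E]. rewrite E. split.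
- specialize (H [] i r eq_refl). rewrite app_nil_r in H. exact H.
- rewrite <- E. apply IH. intros s k t Hr.
  specialize (H (i :: s) k t ltac:(rewrite Hr; reflexivity)).
  rewrite <- !app_assoc. exact H.
Qed.

Lemma up_chain (R : list nat -> list nat -> Prop) r : forall p,
  (forall s k t, r = s ++ k :: t -> R (p ++ s ++ [k]) (p ++ s)) -> chain R (up p r).
Proof.
induction r as [|i r IH]; intros p H; simpl; auto.
destruct (up_last (p ++ [i]) r) as [l E].
assert (Hc : chain R (up (p ++ [i]) r)).
{ apply IH. intros s k t Hr.
  specialize (H (i :: s) k t ltac:(rewrite Hr; reflexivity)).
  rewrite <- !app_assoc. exact H. }
rewrite E in *. rewrite <- app_assoc. simpl. apply chain_join; auto.
simpl. split; auto. specialize (H [] i r eq_refl). rewrite app_nil_r in H. exact H.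
Qed.

Open Scope R_scope.

Definition R0 t p := descend t 0 (PI/2) 0%Z 0%Z p.

Lemma good0 : good 0 (PI/2).
Proof. assert (H:=PI_RGT_0). unfold good; lra. Qed.

Lemma vstate t p : is_vertex t p -> exists s, R0 t p = Some s /\
  algorithm1 t p = (st_x s, st_y s) /\ good (st_a1 s) (st_a2 s).
Proof. intros H. destruct (vertex_descend p t 0 (PI/2) 0%Z 0%Z H) as [s Hs].
exists s. split; auto. split. unfold algorithm1. eapply pos_descend; eauto.
destruct (inv _ _ _ _ _ _ _ good0 Hs) as (_ & _ & g & _). exact g. Qed.

Lemma R0_app t w q : R0 t (w ++ q) = match R0 t w with Some s => dsc s q | None => None end.
Proof. unfold R0. apply descend_app. Qed.

Lemma R0_vertex t p s : R0 t p = Some s -> is_vertex t p.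
Proof. apply descend_vertex. Qed.

Lemma R0_pos t p s : R0 t p = Some s -> algorithm1 t p = (st_x s, st_y s).
Proof. intros; unfold algorithm1; eapply pos_descend; eauto. Qed.

Lemma R0_good t p s : R0 t p = Some s -> good (st_a1 s) (st_a2 s).
Proof. intros Hs. destruct (inv _ _ _ _ _ _ _ good0 Hs) as (_ & _ & g & _). exact g. Qed.

Lemma grid t p : is_vertex t p ->
  (0 <= fst (algorithm1 t p) <= Z.of_nat (tsize t) - 1)%Z /\
  (0 <= snd (algorithm1 t p) <= Z.of_nat (tsize t) - 1)%Z.
Proof.
intros H. destruct (vstate t p H) as (s & Hs & Hp & Hg). rewrite Hp. simpl.
destruct (inv _ _ _ _ _ _ _ good0 Hs) as (_ & _ & (g1 & g2 & g3) & _ & i5 & i6 & i7 & i8).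
assert (HB : 0 <= Bnd (st_t s) (st_a1 s) (st_a2 s)).
{ unfold Bnd. assert (1 <= INR (tsize (st_t s))) by (apply (le_INR 1); apply tsize_pos).
  assert (HP:=PI_RGT_0). apply Rmult_le_pos; [nra|]. left; apply Rinv_0_lt_compat; lra. }
assert (HBt : Bnd t 0 (PI/2) = IZR (Z.of_nat (tsize t)) - 1).
{ unfold Bnd. rewrite <- INR_IZR_INZ. assert (HP:=PI_RGT_0). field. lra. }
rewrite HBt in i5, i6.
assert (IZR (st_x s) <= IZR (Z.of_nat (tsize t) - 1)) by (rewrite minus_IZR; lra).
assert (IZR (st_y s) <= IZR (Z.of_nat (tsize t) - 1)) by (rewrite minus_IZR; lra).
apply le_IZR in H0. apply le_IZR in H1. lia.
Qed.

Lemma child_exists s j sj i : dsc s [j] = Some sj -> (i < j)%nat -> exists si, dsc s [i] = Some si.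
Proof.
unfold dsc. intros Hj Hij.
assert (Hv : is_vertex (st_t s) [i]).
{ apply descend_vertex in Hj. unfold is_vertex in *. destruct (st_t s) as [ts]. simpl in *.
  destruct (nth_error ts j) eqn:E; [|congruence].
  assert (j < length ts)%nat by (apply nth_error_Some; congruence).
  destruct (nth_error ts i) eqn:E2; [discriminate|].
  apply nth_error_None in E2. lia. }
apply (vertex_descend _ _ (st_a1 s) (st_a2 s) (st_x s) (st_y s)) in Hv. exact Hv.
Qed.

Lemma step_cone s i si : good (st_a1 s) (st_a2 s) -> dsc s [i] = Some si ->
  cone (st_a1 si) (st_a2 si) (dd s si) /\ good (st_a1 si) (st_a2 si).
Proof.
intros Hg H. destruct (branch _ _ _ _ _ _ _ _ Hg H) as (s1 & H1 & H2 & _ & g & _ & _ & c).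
unfold dsc in H. rewrite H in H1. injection H1 as <-. split; auto.
Qed.

Lemma respects t : respects_order t (algorithm1 t).
Proof.
intros u i j Hv Hij. cbv zeta.
assert (Hu := vertex_prefix _ _ _ Hv).
destruct (vstate t u Hu) as (su & Hsu & Hpu & Hgu).
destruct (vstate t _ Hv) as (sj & Hsj & Hpj & _).
rewrite R0_app, Hsu in Hsj.
destruct (child_exists _ _ _ i Hsj Hij) as [si Hsi].
assert (Hpi : algorithm1 t (u ++ [i]) = (st_x si, st_y si)).
{ apply R0_pos. rewrite R0_app, Hsu. exact Hsi. }
rewrite Hpu, Hpj, Hpi. simpl.
destruct (step_cone _ _ _ Hgu Hsi) as [Ci _].
destruct (step_cone _ _ _ Hgu Hsj) as [Cj _].
assert (Ho : st_a2 si <= st_a1 sj) by (eapply order_child; eauto).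
unfold dd, dvec in Ci, Cj.
pose proof (cone_cross _ _ _ _ _ _ _ _ Ho Ci Cj) as Hc.
apply Z.lt_gt. apply lt_IZR. rewrite minus_IZR, !mult_IZR, !minus_IZR. lra.
Qed.

Lemma vert_branch t w sw i r s : R0 t w = Some sw -> R0 t (w ++ i :: r) = Some s ->
  exists s1, dsc sw [i] = Some s1 /\ cone (st_a1 s1) (st_a2 s1) (dd sw s) /\
    good (st_a1 s1) (st_a2 s1) /\ dsc sw (i :: r) = Some s.
Proof.
intros Hw Hs. rewrite R0_app, Hw in Hs. assert (Hg := R0_good _ _ _ Hw).
destruct (branch _ _ _ _ _ _ _ _ Hg Hs) as (s1 & H1 & _ & C & g & _).
exists s1. auto.
Qed.

Lemma cone_dd_ne a b s s' : cone a b (dd s s') -> (st_x s', st_y s') <> (st_x s, st_y s).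
Proof. unfold cone, dd, dvec; simpl. intros (h1 & h2 & _) E. injection E as E1 E2.
rewrite E1 in h1. lra. Qed.

Lemma order_either s i j si sj : good (st_a1 s) (st_a2 s) -> i <> j ->
  dsc s [i] = Some si -> dsc s [j] = Some sj ->
  st_a2 si <= st_a1 sj \/ st_a2 sj <= st_a1 si.
Proof. intros Hg Hij Hi Hj. destruct (Nat.lt_gt_cases i j) as [[H|H] _]; auto.
- left. eapply order_child; eauto.
- right. eapply order_child; eauto. Qed.

Lemma injective t u v : is_vertex t u -> is_vertex t v ->
  algorithm1 t u = algorithm1 t v -> u = v.
Proof.
intros Hu Hv Heq.
destruct (lcp u v) as (w & r1 & r2 & -> & -> & Hc).
destruct (vstate t _ Hu) as (su & Hsu & Hpu & _).
destruct (vstate t _ Hv) as (sv & Hsv & Hpv & _).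
destruct (vstate t w (vertex_prefix _ _ _ Hu)) as (sw & Hsw & Hpw & Hgw).
rewrite Hpu, Hpv in Heq.
destruct Hc as [->|[->|(i & j & r1' & r2' & -> & -> & Hij)]].
- destruct r2 as [|j r2]; [reflexivity|].
  rewrite app_nil_r in Hsu. rewrite Hsw in Hsu. injection Hsu as <-.
  destruct (vert_branch _ _ _ _ _ _ Hsw Hsv) as (s1 & _ & C & _).
  exfalso. apply (cone_dd_ne _ _ _ _ C). auto.
- destruct r1 as [|i r1]; [reflexivity|].
  rewrite app_nil_r in Hsv. rewrite Hsw in Hsv. injection Hsv as <-.
  destruct (vert_branch _ _ _ _ _ _ Hsw Hsu) as (s1 & _ & C & _).
  exfalso. apply (cone_dd_ne _ _ _ _ C). auto.
- exfalso.
  destruct (vert_branch _ _ _ _ _ _ Hsw Hsu) as (si & Hi & Ci & _).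
  destruct (vert_branch _ _ _ _ _ _ Hsw Hsv) as (sj & Hj & Cj & _).
  unfold dd, dvec in Ci, Cj. injection Heq as E1 E2. rewrite E1, E2 in Ci.
  destruct (order_either _ _ _ _ _ Hgw Hij Hi Hj) as [Ho|Ho].
  + eapply cone_disj; [exact Ho| exact Ci | exact Cj].
  + eapply cone_disj; [exact Ho| exact Cj | exact Ci].
Qed.

Lemma seg_unpack q a b : on_seg q a b -> exists l, 0 <= l <= 1 /\
  fst q = IZR (fst a) + l * (IZR (fst b) - IZR (fst a)) /\
  snd q = IZR (snd a) + l * (IZR (snd b) - IZR (snd a)).
Proof. auto. Qed.

Lemma removelast_cons_app (w : list nat) i r : removelast (w ++ i :: r) = w ++ removelast (i :: r).
Proof. apply removelast_app. discriminate. Qed.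

Lemma edge_pre t p1 k j r q : is_vertex t ((p1 ++ [k]) ++ j :: r) ->
  on_seg q (algorithm1 t p1) (algorithm1 t (p1 ++ [k])) ->
  on_seg q (algorithm1 t (removelast ((p1 ++ [k]) ++ j :: r))) (algorithm1 t ((p1 ++ [k]) ++ j :: r)) ->
  r = [] /\ q = pt (algorithm1 t (p1 ++ [k])).
Proof.
set (c1 := p1 ++ [k]). intros Hv S1 S2.
assert (Hc1 : is_vertex t c1) by (eapply vertex_prefix; eauto).
assert (Hp1 : is_vertex t p1) by (eapply vertex_prefix; eauto).
destruct (vstate t _ Hp1) as (sp1 & Hsp1 & Hpp1 & Hgp1).
destruct (vstate t _ Hc1) as (sc1 & Hsc1 & Hpc1 & Hgc1).
destruct (vstate t _ Hv) as (sc2 & Hsc2 & Hpc2 & _).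
assert (Hstep : dsc sp1 [k] = Some sc1).
{ unfold c1 in Hsc1. rewrite R0_app, Hsp1 in Hsc1. exact Hsc1. }
destruct (step_cone _ _ _ Hgp1 Hstep) as [Cv _].
destruct (vert_branch _ _ _ _ _ _ Hsc1 Hsc2) as (s1 & Hs1 & _ & _ & Hd2).
rewrite removelast_cons_app in S2.
assert (Hrv : is_vertex t (c1 ++ removelast (j :: r))).
{ rewrite <- removelast_cons_app. destruct (exists_last (l := c1 ++ j :: r) ltac:(destruct c1; discriminate)) as (l' & a & E).
  rewrite E in Hv |- *. rewrite removelast_last. eapply vertex_prefix; eauto. }
destruct (vstate t _ Hrv) as (sp2 & Hsp2 & Hpp2 & _).
rewrite R0_app, Hsc1 in Hsp2.
rewrite Hpp1, Hpc1 in S1. rewrite Hpp2, Hpc2 in S2.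
destruct (seg_unpack _ _ _ S1) as (l1 & Hl1 & Q1x & Q1y).
destruct (seg_unpack _ _ _ S2) as (l2 & Hl2 & Q2x & Q2y). simpl in *.
destruct (seg_branch sc1 j r sc2 l2 (fst q) (snd q) s1 Hgc1 Hs1 Hd2 sp2 Hsp2 Hl2 Q2x Q2y)
  as [C|(Hr & _ & E1 & E2)].
- exfalso. unfold cone, dd, dvec in C, Cv. simpl in C, Cv.
  destruct C as (h1 & _). destruct Cv as (v1 & _). rewrite Q1x in h1. nra.
- split; auto. rewrite Hpc1. unfold pt. simpl. destruct q; simpl in *. subst; auto. rewrite E1, E2; reflexivity.
Qed.

Lemma vertex_removelast t c : is_vertex t c -> is_vertex t (removelast c).
Proof. intros H. destruct c as [|a c]. exact H.
rewrite (app_removelast_last 0%nat (l := a :: c) ltac:(discriminate)) in H.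
eapply vertex_prefix; eauto. Qed.

Lemma edge_branch t w i j r1 r2 q : i <> j ->
  is_vertex t (w ++ i :: r1) -> is_vertex t (w ++ j :: r2) ->
  on_seg q (algorithm1 t (removelast (w ++ i :: r1))) (algorithm1 t (w ++ i :: r1)) ->
  on_seg q (algorithm1 t (removelast (w ++ j :: r2))) (algorithm1 t (w ++ j :: r2)) ->
  r1 = [] /\ r2 = [] /\ q = pt (algorithm1 t w).
Proof.
intros Hij Hv1 Hv2 S1 S2.
destruct (vstate t w (vertex_prefix _ _ _ Hv1)) as (sw & Hsw & Hpw & Hgw).
destruct (vstate t _ Hv1) as (sc1 & Hsc1 & Hpc1 & _).
destruct (vstate t _ Hv2) as (sc2 & Hsc2 & Hpc2 & _).
destruct (vstate t _ (vertex_removelast _ _ Hv1)) as (sp1 & Hsp1 & Hpp1 & _).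
destruct (vstate t _ (vertex_removelast _ _ Hv2)) as (sp2 & Hsp2 & Hpp2 & _).
destruct (vert_branch _ _ _ _ _ _ Hsw Hsc1) as (s1 & Hs1 & _ & _ & Hd1).
destruct (vert_branch _ _ _ _ _ _ Hsw Hsc2) as (s2 & Hs2 & _ & _ & Hd2).
rewrite removelast_cons_app, R0_app, Hsw in Hsp1, Hsp2.
rewrite Hpp1, Hpc1 in S1. rewrite Hpp2, Hpc2 in S2.
destruct (seg_unpack _ _ _ S1) as (l1 & Hl1 & Q1x & Q1y).
destruct (seg_unpack _ _ _ S2) as (l2 & Hl2 & Q2x & Q2y). simpl in *.
destruct (seg_branch sw i r1 sc1 l1 (fst q) (snd q) s1 Hgw Hs1 Hd1 sp1 Hsp1 Hl1 Q1x Q1y)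
  as [C1|(Hr1 & _ & E1 & E2)];
destruct (seg_branch sw j r2 sc2 l2 (fst q) (snd q) s2 Hgw Hs2 Hd2 sp2 Hsp2 Hl2 Q2x Q2y)
  as [C2|(Hr2 & _ & F1 & F2)].
- exfalso. destruct (order_either _ _ _ _ _ Hgw Hij Hs1 Hs2) as [Ho|Ho].
  + eapply cone_disj; [exact Ho| exact C1 | exact C2].
  + eapply cone_disj; [exact Ho| exact C2 | exact C1].
- exfalso. unfold cone in C1. simpl in C1. lra.
- exfalso. unfold cone in C2. simpl in C2. lra.
- split; auto. split; auto. rewrite Hpw. unfold pt. simpl. destruct q; simpl in *.
  rewrite E1, E2; reflexivity.
Qed.

Lemma planar_thm t : planar t (algorithm1 t).
Proof.
split. { intros u v Hu Hv; apply injective; auto. }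
intros c1 c2 [Hne1 Hv1] [Hne2 Hv2] Hneq q S1 S2.
destruct (lcp c1 c2) as (w & r1 & r2 & E1 & E2 & Hc).
destruct Hc as [->|[->|(i & j & r1' & r2' & -> & -> & Hij)]].
- rewrite app_nil_r in E1. subst c1.
  destruct r2 as [|j r2]. { rewrite app_nil_r in E2; congruence. }
  subst c2. destruct (exists_last Hne1) as (p1 & k & E). rewrite E in *.
  rewrite removelast_last in S1.
  destruct (edge_pre t p1 k j r2 q Hv2 S1 S2) as [-> Hq].
  exists (p1 ++ [k]). split; [left; auto|]. split; [right; rewrite removelast_last; auto|]. auto.
- rewrite app_nil_r in E2. subst c2.
  destruct r1 as [|i r1]. { rewrite app_nil_r in E1; congruence. }
  subst c1. destruct (exists_last Hne2) as (p1 & k & E). rewrite E in *.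
  rewrite removelast_last in S2.
  destruct (edge_pre t p1 k i r1 q Hv1 S2 S1) as [-> Hq].
  exists (p1 ++ [k]). split; [right; rewrite removelast_last; auto|]. split; [left; auto|]. auto.
- subst c1 c2.
  destruct (edge_branch t w i j r1' r2' q Hij Hv1 Hv2 S1 S2) as (-> & -> & Hq).
  exists w. split; [right; rewrite removelast_last; auto|].
  split; [right; rewrite removelast_last; auto|]. auto.
Qed.

Lemma step_branch s0 i s1 s sa sb k : good (st_a1 s0) (st_a2 s0) -> dsc s0 [i] = Some s1 ->
  dsc s0 s = Some sa -> dsc s0 (s ++ [k]) = Some sb -> hd_error (s ++ [k]) = Some i ->
  cone (st_a1 s1) (st_a2 s1) (dd sa sb).
Proof.
intros Hg H1 Ha Hb Hh. destruct s as [|i' s].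
- simpl in Hh. injection Hh as ->. simpl in Ha. injection Ha as <-.
  simpl in Hb. destruct (step_cone _ _ _ Hg Hb) as [C _].
  unfold dsc in H1. simpl in Hb. unfold dsc in Hb. rewrite H1 in Hb. injection Hb as ->.
  unfold dd, dvec in *. simpl. exact C.
- simpl in Hh. injection Hh as ->.
  destruct (branch _ _ _ _ _ _ _ _ Hg Ha) as (s1' & Hs1 & Hsa & _ & g1 & _).
  unfold dsc in H1. rewrite H1 in Hs1. injection Hs1 as <-.
  destruct (inv _ _ _ _ _ _ _ g1 Hsa) as (j1 & j2 & j3 & _).
  assert (Hk : dsc sa [k] = Some sb).
  { unfold dsc in Hb, Ha. rewrite descend_app, Ha in Hb. exact Hb. }
  destruct (step_cone _ _ _ j3 Hk) as [C _].
  destruct (inv _ _ _ _ _ _ _ j3 Hk) as (k1 & k2 & _).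
  eapply cone_mono; [| |exact C]; lra.
Qed.

Definition fval (d1 d2 : R) (P : Z * Z) := d1 * IZR (fst P) + d2 * IZR (snd P).
Definition pvec (P Q : Z * Z) : R * R := (IZR (fst Q) - IZR (fst P), IZR (snd Q) - IZR (snd P)).

Lemma steps_in_branch t w sw j r : R0 t w = Some sw -> is_vertex t (w ++ j :: r) ->
  exists sj, dsc sw [j] = Some sj /\ good (st_a1 sj) (st_a2 sj) /\
  forall s k t', j :: r = s ++ k :: t' ->
    cone (st_a1 sj) (st_a2 sj) (pvec (algorithm1 t (w ++ s)) (algorithm1 t (w ++ s ++ [k]))).
Proof.
intros Hw Hv. destruct (vstate t _ Hv) as (sv & Hsv & _).
destruct (vert_branch _ _ _ _ _ _ Hw Hsv) as (sj & Hj & _ & gj & _).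
exists sj. split; auto. split; auto. intros s k t' E.
assert (Hva : is_vertex t (w ++ s ++ [k])).
{ rewrite E in Hv. replace (w ++ s ++ k :: t') with ((w ++ s ++ [k]) ++ t') in Hv
    by (rewrite <- !app_assoc; reflexivity). eapply vertex_prefix; eauto. }
assert (Hvb : is_vertex t (w ++ s)) by (rewrite app_assoc in Hva; eapply vertex_prefix; eauto).
destruct (vstate t _ Hva) as (sb & Hsb & Hpb & _).
destruct (vstate t _ Hvb) as (sa & Hsa & Hpa & _).
assert (Hg := R0_good _ _ _ Hw).
rewrite Hpa, Hpb. rewrite R0_app, Hw in Hsa, Hsb.
apply (step_branch sw j sj s sa sb k Hg Hj Hsa Hsb).
destruct s; simpl in *; injection E; intros; subst; reflexivity.
Qed.

Lemma mono_path t w r1 r2 d1 d2 : is_vertex t (w ++ r1) -> is_vertex t (w ++ r2) ->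
  (d1, d2) <> (0, 0) ->
  (forall s k t', r2 = s ++ k :: t' ->
     fval d1 d2 (algorithm1 t (w ++ s)) < fval d1 d2 (algorithm1 t (w ++ s ++ [k]))) ->
  (forall s k t', r1 = s ++ k :: t' ->
     fval d1 d2 (algorithm1 t (w ++ s ++ [k])) < fval d1 d2 (algorithm1 t (w ++ s))) ->
  exists l, is_path t l /\ hd_error l = Some (w ++ r1) /\ last l [] = w ++ r2 /\
    monotone_path (algorithm1 t) l.
Proof.
intros Hv1 Hv2 Hd HD HU.
set (Rel := fun a b => tree_adj a b /\ fval d1 d2 (algorithm1 t a) < fval d1 d2 (algorithm1 t b)).
destruct (up_last w r1) as [U EU]. destruct (down_hd w r2) as [D ED].
exists (U ++ w :: D).
assert (Hch : chain Rel (U ++ w :: D)).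
{ apply chain_join.
  - rewrite <- EU. apply up_chain. intros s k t' E. split.
    + right. exists k. rewrite app_assoc. reflexivity.
    + eapply HU; eauto.
  - rewrite <- ED. apply down_chain. intros s k t' E. split.
    + left. exists k. rewrite app_assoc. reflexivity.
    + eapply HD; eauto. }
split; [split|].
- apply Forall_forall. intros x Hx. apply in_app_or in Hx. destruct Hx as [Hx|Hx].
  + assert (In x (up w r1)) by (rewrite EU; apply in_or_app; auto).
    destruct (up_in _ _ _ H) as (s & t' & -> & ->).
    rewrite app_assoc in Hv1. eapply vertex_prefix; eauto.
  + assert (In x (down w r2)) by (rewrite ED; exact Hx).
    destruct (down_in _ _ _ H) as (s & t' & -> & ->).
    rewrite app_assoc in Hv2. eapply vertex_prefix; eauto.
- intros k Hk. exact (proj1 (chain_nth _ _ [] Hch k Hk)).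
- split.
  + destruct (up_hd w r1) as [L EL]. rewrite EL in EU.
    destruct U as [|u0 U].
    * simpl in EU. injection EU as E1 E2. simpl. rewrite E1. reflexivity.
    * simpl in EU. injection EU as E1 E2. simpl. rewrite E1. reflexivity.
  + split.
    * rewrite <- ED. destruct (down_last w r2) as [D' ED']. rewrite ED', app_assoc.
      apply last_last.
    * exists d1, d2. split; auto. intros k Hk.
      exact (proj2 (chain_nth _ _ [] Hch k Hk)).
Qed.

Lemma fval_lt d1 d2 P Q : 0 < d1 * fst (pvec P Q) + d2 * snd (pvec P Q) ->
  fval d1 d2 P < fval d1 d2 Q.
Proof. unfold fval, pvec; simpl. intros H. nra. Qed.

Lemma fval_gt d1 d2 P Q : d1 * fst (pvec P Q) + d2 * snd (pvec P Q) < 0 ->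
  fval d1 d2 Q < fval d1 d2 P.
Proof. unfold fval, pvec; simpl. intros H. nra. Qed.

Lemma nil_not_app (A : Type) (s : list A) k t' : [] <> s ++ k :: t'.
Proof. destruct s; discriminate. Qed.

Lemma sincos_nz b : (- sin b, cos b) <> (0, 0) /\ (sin b, - cos b) <> (0, 0).
Proof. assert (H := sin2_cos2 b). unfold Rsqr in H.
split; intros E; injection E as E1 E2.
- assert (sin b = 0) by lra. rewrite H0, E2 in H. lra.
- assert (cos b = 0) by lra. rewrite H0, E1 in H. lra. Qed.

Lemma monotone_thm t : monotone_drawing t (algorithm1 t).
Proof.
intros u v Hu Hv.
destruct (lcp u v) as (w & r1 & r2 & -> & -> & Hc).
destruct (vstate t w (vertex_prefix _ _ _ Hu)) as (sw & Hsw & Hpw & Hgw).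
destruct Hc as [->|[->|(i & j & r1' & r2' & -> & -> & Hij)]].
- destruct r2 as [|j r2].
  + apply (mono_path t w [] [] 1 0); auto.
    * intros E; injection E; lra.
    * intros s k t' E. exfalso; eapply nil_not_app; eauto.
    * intros s k t' E. exfalso; eapply nil_not_app; eauto.
  + destruct (steps_in_branch _ _ _ _ _ Hsw Hv) as (sj & _ & _ & HS).
    apply (mono_path t w [] (j :: r2) 1 1); auto.
    * intros E; injection E; lra.
    * intros s k t' E. apply fval_lt. destruct (HS s k t' E) as (h1 & h2 & _). lra.
    * intros s k t' E. exfalso; eapply nil_not_app; eauto.
- destruct r1 as [|i r1].
  + apply (mono_path t w [] [] 1 0); auto.
    * intros E; injection E; lra.
    * intros s k t' E. exfalso; eapply nil_not_app; eauto.
    * intros s k t' E. exfalso; eapply nil_not_app; eauto.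
  + destruct (steps_in_branch _ _ _ _ _ Hsw Hu) as (si & _ & _ & HS).
    apply (mono_path t w (i :: r1) [] (-1) (-1)); auto.
    * intros E; injection E; lra.
    * intros s k t' E. exfalso; eapply nil_not_app; eauto.
    * intros s k t' E. apply fval_gt. destruct (HS s k t' E) as (h1 & h2 & _). lra.
- destruct (steps_in_branch _ _ _ _ _ Hsw Hu) as (si & Hsi & gi & HSi).
  destruct (steps_in_branch _ _ _ _ _ Hsw Hv) as (sj & Hsj & gj & HSj).
  destruct gi as (gi1 & gi2 & gi3). destruct gj as (gj1 & gj2 & gj3).
  destruct (order_either _ _ _ _ _ Hgw Hij Hsi Hsj) as [Ho|Ho].
  + set (b := st_a2 si).
    apply (mono_path t w (i :: r1') (j :: r2') (- sin b) (cos b)); auto.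
    * apply sincos_nz.
    * intros s k t' E. apply fval_lt. specialize (HSj s k t' E).
      destruct (pvec (algorithm1 t (w ++ s)) (algorithm1 t (w ++ s ++ [k]))) as [vx vy].
      apply (cone_mono b (st_a2 sj)) in HSj; [|unfold b; lra|lra].
      apply cone_ineq_gt in HSj; [|unfold b; lra]. simpl. unfold b in *. nra.
    * intros s k t' E. apply fval_gt. specialize (HSi s k t' E).
      destruct (pvec (algorithm1 t (w ++ s)) (algorithm1 t (w ++ s ++ [k]))) as [vx vy].
      apply cone_ineq_lt in HSi; [|unfold b; lra]. simpl. unfold b in *. nra.
  + set (b := st_a2 sj).
    apply (mono_path t w (i :: r1') (j :: r2') (sin b) (- cos b)); auto.
    * apply sincos_nz.
    * intros s k t' E. apply fval_lt. specialize (HSj s k t' E).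
      destruct (pvec (algorithm1 t (w ++ s)) (algorithm1 t (w ++ s ++ [k]))) as [vx vy].
      apply cone_ineq_lt in HSj; [|unfold b; lra]. simpl. unfold b in *. nra.
    * intros s k t' E. apply fval_gt. specialize (HSi s k t' E).
      destruct (pvec (algorithm1 t (w ++ s)) (algorithm1 t (w ++ s ++ [k]))) as [vx vy].
      apply (cone_mono b (st_a2 si)) in HSi; [|unfold b; lra|lra].
      apply cone_ineq_gt in HSi; [|unfold b; lra]. simpl. unfold b in *. nra.
Qed.

Theorem theorem4_aux (t : tree) :
  let n := tsize t in
  let pos := algorithm1 t in
  monotone_drawing t pos /\
  planar t pos /\
  pos [] = (0%Z, 0%Z) /\
  respects_order t pos /\
  (forall p, is_vertex t p ->
     (0 <= fst (pos p) <= Z.of_nat n - 1)%Z /\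
     (0 <= snd (pos p) <= Z.of_nat n - 1)%Z).
Proof.
cbv zeta. split; [apply monotone_thm|]. split; [apply planar_thm|].
split; [reflexivity|]. split; [apply respects|]. apply grid.
Qed.


Theorem theorem4 (t : tree) :
  let n := tsize t in
  let pos := algorithm1 t in
  monotone_drawing t pos /\
  planar t pos /\
  pos [] = (0%Z, 0%Z) /\
  respects_order t pos /\
  (forall p, is_vertex t p ->
     (0 <= fst (pos p) <= Z.of_nat n - 1)%Z /\
     (0 <= snd (pos p) <= Z.of_nat n - 1)%Z).
Proof. exact (theorem4_aux t). Qed.
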